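(* Let $R$ be a tolerance relation on $X=\{1,\ldots,n\}$ and let $A(R)$ be its tolerance algebra. Then $R$ is an equivalence relation if and only if $A(R)$ has no subalgebra isomorphic to $\mathfrak{A}_3$.
   Context: A tolerance relation on a set $X$ is a reflexive and symmetric relation $R\subset X\times X$. For $R$ a tolerance relation on $X=\{1,\ldots,n\}$, the tolerance algebra $A(R)$ is the complex vector space with basis $\{E_{ij}:(i,j)\in R\}$ (equivalently, the $n\times n$ complex matrices $a$ with $a_{ij}=0$ whenever $(i,j)\notin R$), with bilinear product determined by $E_{ij}\star E_{kl}=\delta_{jk}E_{il}$ if $(i,l)\in R$ and $E_{ij}\star E_{kl}=0$ otherwise, and involution $(E_{ij})^*=E_{ji}$ extended conjugate-linearly (i.e. $a\star b$ is the matrix product $ab$ with the entries in positions $(i,l)\notin R$ set to zero). $\mathfrak{A}_3$ denotes the tolerance algebra of the relation on $\{1,2,3\}$ with $1\sim 2$, $2\sim 3$, $1\not\sim 3$ (together with reflexivity and symmetry), i.e. $3\times 3$ matrices with vanishing $(1,3)$ and $(3,1)$ entries, with product the matrix product followed by setting the $(1,3)$ and $(3,1)$ entries to zero. *)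

(* Defs.v *)
From HB Require Import structures.
From mathcomp Require Import all_boot all_order all_algebra.
From mathcomp Require Import reals.
From mathcomp Require Import complex.
Set Implicit Arguments. Unset Strict Implicit. Unset Printing Implicit Defensive.
Import GRing.Theory Num.Theory.
Local Open Scope ring_scope.

Section Tolerance.
Variables (R : realType) (n : nat) (r : rel 'I_n).

Definition tolerance_rel := reflexive r /\ symmetric r.

Definition is_equivalence := [/\ reflexive r, symmetric r & transitive r].

Definition inA (a : 'M[R[i]]_n) : Prop := forall i j, ~~ r i j -> a i j = 0.

Definition tprod (a b : 'M[R[i]]_n) : 'M[R[i]]_n :=
  \matrix_(i, l) (if r i l then (a *m b) i l else 0).

Definition tstar (a : 'M[R[i]]_n) : 'M[R[i]]_n :=
  \matrix_(i, j) (a j i)^*.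

Definition is_subalgebra (S : 'M[R[i]]_n -> Prop) : Prop :=
  (forall a, S a -> inA a) /\
  S 0 /\
  (forall a b, S a -> S b -> S (a + b)) /\
  (forall (c : R[i]) a, S a -> S (c *: a)) /\
  (forall a b, S a -> S b -> S (tprod a b)) /\
  (forall a, S a -> S (tstar a)).

End Tolerance.

(* The relation on {1,2,3} (here 'I_3 = {0,1,2}): 1~2, 2~3, 1 not~ 3. *)
Definition r3 : rel 'I_3 :=
  fun i j => ~~ (((i == 0 :> nat) && (j == 2 :> nat)) ||
                 ((i == 2 :> nat) && (j == 0 :> nat))).

Definition iso_to_A3 (R : realType) (n : nat) (r : rel 'I_n)
  (S : 'M[R[i]]_n -> Prop) : Prop :=
  exists f : 'M[R[i]]_3 -> 'M[R[i]]_n,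
    (forall a, inA r3 a -> S (f a)) /\
    (forall b, S b -> exists2 a, inA r3 a & f a = b) /\
    (forall a b, inA r3 a -> inA r3 b -> f a = f b -> a = b) /\
    (forall a b, inA r3 a -> inA r3 b -> f (a + b) = f a + f b) /\
    (forall (c : R[i]) a, inA r3 a -> f (c *: a) = c *: f a) /\
    (forall a b, inA r3 a -> inA r3 b ->
       f (tprod r3 a b) = tprod r (f a) (f b)) /\
    (forall a, inA r3 a -> f (tstar a) = tstar (f a)).

(* Main.v *)
Require Import Defs.
From HB Require Import structures.
From mathcomp Require Import all_boot all_order all_algebra.
From mathcomp Require Import reals.
From mathcomp Require Import complex.
Set Implicit Arguments. Unset Strict Implicit. Unset Printing Implicit Defensive.
Import GRing.Theory Num.Theory.
Local Open Scope ring_scope.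

Definition o0 : 'I_3 := @Ordinal 3 0 isT.
Definition o1 : 'I_3 := @Ordinal 3 1 isT.
Definition o2 : 'I_3 := @Ordinal 3 2 isT.

Lemma ord3_cases (p : 'I_3) : [\/ p = o0, p = o1 | p = o2].
Proof.
case: p => [[|[|[|p]]] Hp] //.
- by apply: Or31; apply: val_inj.
- by apply: Or32; apply: val_inj.
- by apply: Or33; apply: val_inj.
Qed.

Section Dir1.
Variables (R : realType) (n : nat) (r : rel 'I_n).
Hypothesis (eqr : is_equivalence r).

Lemma tprod_mul (a b : 'M[R[i]]_n) : inA r a -> inA r b -> tprod r a b = a *m b.
Proof.
case: eqr => rf sy tr Ha Hb; apply/matrixP => x y; rewrite !mxE.
case E: (r x y) => //; symmetry; apply: big1 => z _.
case E1: (r x z); last by rewrite Ha ?E1 // mul0r.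
case E2: (r z y); last by rewrite Hb ?E2 // mulr0.
by rewrite (tr _ _ _ E1 E2) in E.
Qed.

Lemma tprod_inA (a b : 'M[R[i]]_n) : inA r (tprod r a b).
Proof. by move=> x y H; rewrite mxE (negbTE H). Qed.

End Dir1.

Lemma tprod_inA3 (R : realType) (a b : 'M[R[i]]_3) : inA r3 (tprod r3 a b).
Proof. by move=> x y H; rewrite mxE (negbTE H). Qed.

Lemma dir1 (R : realType) (n : nat) (r : rel 'I_n) :
  is_equivalence r ->
  ~ (exists S : 'M[R[i]]_n -> Prop, is_subalgebra r S /\ iso_to_A3 r S).
Proof.
move=> eqr [S [[SA _] [f [fS [_ [finj [_ [_ [fM _]]]]]]]]].
set e01 := delta_mx o0 o1 : 'M[R[i]]_3.
set e12 := delta_mx o1 o2 : 'M[R[i]]_3.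
set e21 := delta_mx o2 o1 : 'M[R[i]]_3.
have inD : forall p q, r3 p q -> inA r3 (delta_mx p q : 'M[R[i]]_3).
  move=> p q H x y Hxy; rewrite mxE.
  by case: eqP => [ex|] //; case: eqP => [ey|] //=; subst; rewrite H in Hxy.
have H01 : inA r3 e01 by apply: inD.
have H12 : inA r3 e12 by apply: inD.
have H21 : inA r3 e21 by apply: inD.
have inS : forall a, inA r3 a -> inA r (f a) by move=> a Ha; apply: SA; apply: fS.
have E : tprod r3 (tprod r3 e01 e12) e21 = tprod r3 e01 (tprod r3 e12 e21).
  apply: (finj _ _ (tprod_inA3 _ _) (tprod_inA3 _ _)).
  rewrite (fM _ _ (tprod_inA3 _ _) H21) (fM _ _ H01 H12).
  rewrite (fM _ _ H01 (tprod_inA3 _ _)) (fM _ _ H12 H21).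
  have I01 := inS _ H01; have I12 := inS _ H12; have I21 := inS _ H21.
  rewrite !(tprod_mul eqr) ?mulmxA //.
  1,2: by rewrite -(tprod_mul eqr) //; apply: tprod_inA.
have := congr1 (fun m : 'M[R[i]]_3 => m o0 o1) E.
rewrite /e01 /e12 /e21 /tprod.
rewrite !mxE !big_ord_recl !big_ord0 !mxE /=.
rewrite !big_ord_recl !big_ord0 !mxE /=.
rewrite !(mul0r,mulr0,mul1r,addr0,add0r) => /eqP.
by rewrite eq_sym oner_eq0.
Qed.
Section Dir2.
Variables (R : realType) (n : nat) (r : rel 'I_n).
Hypotheses (rf : reflexive r) (sy : symmetric r).
Variables (i j k : 'I_n).
Hypotheses (rij : r i j) (rjk : r j k) (nik : ~~ r i k).

Definition idx (p : 'I_3) : 'I_n :=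
  if val p == 0%N then i else if val p == 1%N then j else k.

Lemma idx_r p q : r (idx p) (idx q) = r3 p q.
Proof.
have rki : r k i = false by rewrite sy; exact: negbTE.
case: (ord3_cases p) => ->; case: (ord3_cases q) => -> /=;
  rewrite /idx /= ?rf // ?(negbTE nik) // sy //.
Qed.

Lemma idx_inj : injective idx.
Proof.
have nij : i != j by apply: contraNneq nik => ->.
have njk : j != k by apply: contraNneq nik => <-.
have nik' : i != k by apply: contraNneq nik => <-.
move=> p q; case: (ord3_cases p) => ->; case: (ord3_cases q) => -> //=;
  rewrite /idx /= => E; rewrite E ?eqxx in nij njk nik' => //.
Qed.

Definition gx (x : 'I_n) : option 'I_3 := [pick p | idx p == x].

Lemma gxP x p : gx x = Some p -> idx p = x.
Proof. by rewrite /gx; case: pickP => // q /eqP H [<-]. Qed.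

Lemma gx_idx p : gx (idx p) = Some p.
Proof.
rewrite /gx; case: pickP => [q /eqP /idx_inj -> //|/(_ p)].
by rewrite eqxx.
Qed.

Definition fmap (a : 'M[R[i]]_3) : 'M[R[i]]_n :=
  \matrix_(x, y) match gx x, gx y with Some p, Some q => a p q | _, _ => 0 end.

Lemma sum_reindex (F : 'I_n -> R[i]) :
  (forall z, gx z = None -> F z = 0) -> \sum_z F z = \sum_s F (idx s).
Proof.
move=> HF; rewrite (bigID (fun z => gx z != None)) /=.
rewrite [X in _ + X]big1 ?addr0; last by move=> z /negPn /eqP; apply: HF.
rewrite (reindex_onto idx (fun z => odflt o0 (gx z))) /=.
  by apply: eq_bigl => s; rewrite gx_idx /= eqxx.
by move=> z; case E: (gx z) => [p|] //= _; apply: gxP.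
Qed.


Lemma fmap_inA a : inA r3 a -> inA r (fmap a).
Proof.
move=> Ha x y Hxy; rewrite mxE.
case Ex: (gx x) => [p|] //; case Ey: (gx y) => [q|] //.
apply: Ha; by rewrite -idx_r (gxP Ex) (gxP Ey).
Qed.

Lemma fmapD a b : fmap (a + b) = fmap a + fmap b.
Proof.
apply/matrixP => x y; rewrite !mxE.
by case: (gx x) => [p|]; case: (gx y) => [q|]; rewrite ?mxE ?addr0.
Qed.

Lemma fmapZ (c : R[i]) a : fmap (c *: a) = c *: fmap a.
Proof.
apply/matrixP => x y; rewrite !mxE.
by case: (gx x) => [p|]; case: (gx y) => [q|]; rewrite ?mxE ?mulr0.
Qed.

Lemma fmap_star a : fmap (tstar a) = tstar (fmap a).
Proof.
apply/matrixP => x y; rewrite !mxE.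
by case: (gx x) => [p|]; case: (gx y) => [q|]; rewrite ?mxE ?conjC0.
Qed.

Lemma fmap_inj a b : fmap a = fmap b -> a = b.
Proof.
move=> E; apply/matrixP => p q.
have := congr1 (fun m : 'M[R[i]]_n => m (idx p) (idx q)) E.
by rewrite !mxE !gx_idx.
Qed.

Lemma fmapM a b : fmap (tprod r3 a b) = tprod r (fmap a) (fmap b).
Proof.
apply/matrixP => x y; rewrite !mxE.
case Ex: (gx x) => [p|]; last first.
  case: ifP => // _; symmetry; apply: big1 => z _; by rewrite mxE Ex mul0r.
case Ey: (gx y) => [q|]; last first.
  case: ifP => // _; symmetry; apply: big1 => z _; rewrite !mxE Ey; by case: (gx x) => [?|]; case: (gx z) => [?|]; rewrite ?mulr0 ?mul0r.
rewrite mxE -(gxP Ex) -(gxP Ey) idx_r; case: ifP => // _.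
rewrite (sum_reindex (F := fun z => fmap a (idx p) z * fmap b z (idx q))).
  by rewrite mxE; apply: eq_bigr => s _; rewrite !mxE !gx_idx.
by move=> z Hz; rewrite [fmap b _ _]mxE Hz mulr0.
Qed.

End Dir2.

Lemma r3_sym : symmetric r3.
Proof.
by move=> p q; case: (ord3_cases p) => ->; case: (ord3_cases q) => ->.
Qed.

Lemma construct (R : realType) (n : nat) (r : rel 'I_n) (i j k : 'I_n) :
  reflexive r -> symmetric r -> r i j -> r j k -> ~~ r i k ->
  exists S : 'M[R[i]]_n -> Prop, is_subalgebra r S /\ iso_to_A3 r S.
Proof.
move=> rf sy rij rjk nik.
pose f := @fmap R n i j k.
exists (fun b => exists2 a, inA r3 a & f a = b); split.
  split; first by move=> b [a Ha <-]; apply: fmap_inA.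
  split; first by exists 0; [move=> *; rewrite mxE | rewrite /f -(scale0r (0:'M[R[i]]_3)) fmapZ scale0r].
  split; first by move=> _ _ [a Ha <-] [b Hb <-]; exists (a + b);
    [move=> x y H; rewrite mxE Ha ?Hb ?addr0 | exact: fmapD].
  split; first by move=> c _ [a Ha <-]; exists (c *: a);
    [move=> x y H; rewrite mxE Ha ?mulr0 | exact: fmapZ].
  split; first by move=> _ _ [a Ha <-] [b Hb <-]; exists (tprod r3 a b);
    [exact: tprod_inA3 | exact: fmapM].
  by move=> _ [a Ha <-]; exists (tstar a);
    [move=> x y H; rewrite mxE Ha ?conjC0 // r3_sym | exact: fmap_star].
exists f; split; first by move=> a Ha; exists a.
split; first by move=> b [a Ha <-]; exists a.
split; first by move=> a b _ _ E; exact: (fmap_inj rf rij rjk nik E).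
split; first by move=> a b _ _; apply: fmapD.
split; first by move=> c a _; apply: fmapZ.
split; first by move=> a b _ _; apply: fmapM.
by move=> a _; apply: fmap_star.
Qed.

Theorem lemma3p6 (R : realType) (n : nat) (r : rel 'I_n) :
  tolerance_rel r ->
  (is_equivalence r <->
   ~ (exists S : 'M[R[i]]_n -> Prop, is_subalgebra r S /\ iso_to_A3 r S)).
Proof.
move=> [rf sy]; split; first exact: dir1.
move=> H; split => // y x z Hxy Hyz.
apply/negPn/negP => Hxz; apply: H.
exact: (@construct R n r x y z rf sy Hxy Hyz Hxz).
Qed.
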